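(* Let $L$ be an interval locale and $E$ a presheaf on $L_{+}$. Then the composite morphism $E\to\operatorname{Im}(E)\to L(\operatorname{Im}(E))$ is initial among all presheaf maps $E\to F$ with $F$ a sheaf of monomorphisms on $L_{+}$.
   Context: A locale $L$ is a complete lattice in which finite meets distribute over arbitrary joins, with Grothendieck topology: $\{b_j\le a\}$ covers $a$ iff $\bigvee_j b_j=a$. $L$ is an interval if it is totally ordered and densely ordered. $i$ is the bottom element of $L$; $L_{+}=L\sqcup\{0\}$ with a new bottom $0<i$. A sheaf of monomorphisms on $L_{+}$ is a sheaf $F$ with $F(b)\to F(a)$ injective for all $a\le b$ in $L$. For a presheaf $E$ on $L_{+}$, $\operatorname{Im}(E)(s)$ is the image of $E(s)\to E(i)$ for $s\in L$, $\operatorname{Im}(E)(0)=\ast$. For a presheaf $F$ on $L_{+}$, $LF(a)=\varprojlim_{0<b<a}F(b)$ for $a\in L$, $a\neq i$, $LF(i)=F(i)$, $LF(0)=\ast$; $\eta:F\to LF$ is the canonical map. *)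

(* Defs.v *)
From Stdlib Require Import Classical FunctionalExtensionality ProofIrrelevance.
Set Implicit Arguments.
Unset Strict Implicit.

Record locale := Locale {
  car :> Type;
  le : car -> car -> Prop;
  le_refl : forall a, le a a;
  le_trans : forall a b c, le a b -> le b c -> le a c;
  le_antisym : forall a b, le a b -> le b a -> a = b;
  join : forall J : Type, (J -> car) -> car;
  join_ub : forall (J : Type) (b : J -> car) (j : J), le (b j) (join b);
  join_least : forall (J : Type) (b : J -> car) (u : car),
      (forall j, le (b j) u) -> le (join b) u;
  meet : car -> car -> car;
  meet_lb1 : forall a b, le (meet a b) a;
  meet_lb2 : forall a b, le (meet a b) b;
  meet_greatest : forall a b c, le c a -> le c b -> le c (meet a b);
  meet_join_distr : forall (a : car) (J : Type) (b : J -> car),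
      meet a (join b) = join (fun j => meet a (b j))
}.
Arguments le {l} _ _.
Arguments join {l} {J} _.
Arguments meet {l} _ _.

Definition lt {L : locale} (a b : L) : Prop := le a b /\ a <> b.

Definition is_interval (L : locale) : Prop :=
  (forall a b : L, le a b \/ le b a) /\
  (forall a b : L, lt a b -> exists c : L, lt a c /\ lt c b).

Section Plus.
Variable L : locale.

Definition bot : L := @join L Empty_set (fun e => match e with end).

Lemma bot_le (a : L) : le bot a.
Proof. apply join_least. intros []. Qed.

(** [L_+ = L ⊔ {0}]: elements are [option L], with [None] the new bottom [0]. *)
Definition leP (x y : option L) : Prop :=
  match x, y with
  | None, _ => True
  | Some _, None => False
  | Some a, Some b => le a b
  end.

Definition is_joinP (J : Type) (b : J -> option L) (a : option L) : Prop :=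
  (forall j, leP (b j) a) /\ (forall u, (forall j, leP (b j) u) -> leP a u).

Record presheaf := Presheaf {
  ob :> option L -> Type;
  res : forall x y : option L, leP x y -> ob y -> ob x;
  res_id : forall x (h : leP x x) s, res h s = s;
  res_comp : forall x y z (hxy : leP x y) (hyz : leP y z) (hxz : leP x z) s,
      res hxy (res hyz s) = res hxz s
}.

Arguments res p {x y} _ _.
Arguments res_id p {x} _ _.
Arguments res_comp p {x y z} _ _ _ _.
Unset Implicit Arguments.
Record hom (E F : presheaf) := Hom {
  app : forall x, E x -> F x;
  app_nat : forall x y (h : leP x y) (s : E y),
      app x (@res E x y h s) = @res F x y h (app y s)
}.
Set Implicit Arguments.
Arguments app {E F} _ _ _.

Definition comp (E F G : presheaf) (g : hom F G) (f : hom E F) : hom E G.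
Proof.
  refine (Hom E G (fun x s => app g x (app f x s)) _).
  intros x y h s. rewrite app_nat, app_nat. reflexivity.
Defined.

Definition is_sheaf (F : presheaf) : Prop :=
  forall (a : option L) (J : Type) (b : J -> option L)
         (hb : forall j, leP (b j) a),
    is_joinP b a ->
    forall s : forall j, F (b j),
      (forall j k (c : option L) (h1 : leP c (b j)) (h2 : leP c (b k)),
          res F h1 (s j) = res F h2 (s k)) ->
      exists t : F a, (forall j, res F (hb j) t = s j) /\
        forall t' : F a, (forall j, res F (hb j) t' = s j) -> t' = t.

Definition is_mono_sheaf (F : presheaf) : Prop :=
  is_sheaf F /\
  forall (a b : L) (h : le a b) (s t : F (Some b)),
    res F (x := Some a) (y := Some b) h s = res F (x := Some a) (y := Some b) h t ->
    s = t.

Lemma subset_eq (A : Type) (P : A -> Prop) (u v : sig P) :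
  proj1_sig u = proj1_sig v -> u = v.
Proof.
  destruct u as [u pu], v as [v pv]; simpl; intros ->.
  f_equal; apply proof_irrelevance.
Qed.

Section Image.
Variable E : presheaf.

Definition im_ob (x : option L) : Type :=
  match x with
  | None => unit
  | Some s => {y : E (Some bot) |
                exists z : E (Some s),
                  res E (x := Some bot) (y := Some s) (bot_le s) z = y}
  end.

Lemma im_res_lemma (a b : L) (h : le a b) (s : im_ob (Some b)) :
  exists z : E (Some a),
    res E (x := Some bot) (y := Some a) (bot_le a) z = proj1_sig s.
Proof.
  destruct s as [y [z Hz]]; simpl.
  exists (res E (x := Some a) (y := Some b) h z).
  rewrite (res_comp E (x := Some bot) (y := Some a) (z := Some b) (bot_le a) h (bot_le b)).
  exact Hz.
Qed.

Definition im_res (x y : option L) : leP x y -> im_ob y -> im_ob x :=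
  match x as x0, y as y0 return leP x0 y0 -> im_ob y0 -> im_ob x0 with
  | None, _ => fun _ _ => tt
  | Some a, None => fun h _ => False_rect _ h
  | Some a, Some b => fun h s => exist _ (proj1_sig s) (im_res_lemma h s)
  end.

Definition Im : presheaf.
Proof.
  refine (@Presheaf im_ob im_res _ _).
  - intros [a|] h s; simpl.
    + apply subset_eq; reflexivity.
    + destruct s; reflexivity.
  - intros [a|] [b|] [c|] hxy hyz hxz s; simpl in *;
      try contradiction; try reflexivity.
    apply subset_eq; reflexivity.
Defined.

Definition quot_app (x : option L) : E x -> Im x :=
  match x as x0 return E x0 -> im_ob x0 with
  | None => fun _ => tt
  | Some a => fun s =>
      exist _ (res E (x := Some bot) (y := Some a) (bot_le a) s)
            (ex_intro _ s eq_refl)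
  end.

Definition quot : hom E Im.
Proof.
  refine (@Hom E Im quot_app _).
  intros [a|] [b|] h s; simpl in *; try contradiction; try reflexivity.
  apply subset_eq; simpl.
  apply res_comp.
Defined.
End Image.

(** For [a ∈ L], [LF(a)] is the limit of the
    [F(b)] over the index set [{b | b < a or b = i}]: for [a ≠ i] this is
    [{b | 0 < b < a}], and for [a = i] it is [{i}], whose limit is
    (canonically isomorphic to) [F(i)].  [LF(0) = *]. *)
Section Lim.
Variable F : presheaf.

Definition LP (a b : L) : Prop := lt b a \/ b = bot.

Lemma LP_le (a b : L) : LP a b -> le b a.
Proof. intros [[H _] | ->]; [exact H | apply bot_le]. Qed.

Lemma LP_mono (a a' b : L) : le a a' -> LP a b -> LP a' b.
Proof.
  intros h [[H1 H2] | H]; [left | right; exact H].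
  split; [exact (le_trans H1 h) |].
  intros ->; apply H2, le_antisym; assumption.
Qed.

Definition lim_ob (x : option L) : Type :=
  match x with
  | None => unit
  | Some a =>
      {f : forall b : L, LP a b -> F (Some b) |
        forall (b c : L) (hb : LP a b) (hc : LP a c) (hbc : le b c),
          res F (x := Some b) (y := Some c) hbc (f c hc) = f b hb}
  end.

Lemma lim_res_lemma (a a' : L) (h : le a a') (s : lim_ob (Some a')) :
  forall (b c : L) (hb : LP a b) (hc : LP a c) (hbc : le b c),
    res F (x := Some b) (y := Some c) hbc (proj1_sig s c (LP_mono h hc))
    = proj1_sig s b (LP_mono h hb).
Proof. destruct s as [f Hf]; simpl; intros; apply Hf. Qed.

Definition lim_res (x y : option L) : leP x y -> lim_ob y -> lim_ob x :=
  match x as x0, y as y0 return leP x0 y0 -> lim_ob y0 -> lim_ob x0 with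
  | None, _ => fun _ _ => tt
  | Some a, None => fun h _ => False_rect _ h
  | Some a, Some a' => fun h s =>
      exist _ (fun b hb => proj1_sig s b (LP_mono h hb)) (lim_res_lemma h s)
  end.

Definition Lim : presheaf.
Proof.
  refine (@Presheaf lim_ob lim_res _ _).
  - intros [a|] h s; simpl.
    + apply subset_eq; simpl.
      apply functional_extensionality_dep; intro b.
      apply functional_extensionality_dep; intro hb.
      f_equal; apply proof_irrelevance.
    + destruct s; reflexivity.
  - intros [a|] [b|] [c|] hxy hyz hxz s; simpl in *;
      try contradiction; try reflexivity.
    apply subset_eq; simpl.
    apply functional_extensionality_dep; intro d.
    apply functional_extensionality_dep; intro hd.
    f_equal; apply proof_irrelevance.
Defined.

Lemma eta_lemma (a : L) (s : F (Some a)) :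
  forall (b c : L) (hb : LP a b) (hc : LP a c) (hbc : le b c),
    res F (x := Some b) (y := Some c) hbc
        (res F (x := Some c) (y := Some a) (LP_le hc) s)
    = res F (x := Some b) (y := Some a) (LP_le hb) s.
Proof. intros; apply res_comp. Qed.

Definition eta_app (x : option L) : F x -> Lim x :=
  match x as x0 return F x0 -> lim_ob x0 with
  | None => fun _ => tt
  | Some a => fun s =>
      exist _ (fun b hb => res F (x := Some b) (y := Some a) (LP_le hb) s)
            (eta_lemma s)
  end.

Definition eta : hom F Lim.
Proof.
  refine (@Hom F Lim eta_app _).
  intros [a|] [b|] h s; simpl in *; try contradiction; try reflexivity.
  apply subset_eq; simpl.
  apply functional_extensionality_dep; intro c.
  apply functional_extensionality_dep; intro hc.
  rewrite (res_comp F (x := Some c) (y := Some a) (z := Some b) (LP_le hc) h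
             (LP_le (LP_mono h hc))).
  reflexivity.
Defined.
End Lim.

End Plus.
Arguments hom {L} E F.
Arguments app {L E F} _ _ _.
Arguments res {L} p {x y} _ _.


Definition unit_map {L : locale} (E : presheaf L) : hom E (Lim (Im E)) :=
  comp (eta (Im E)) (quot E).

(* Main.v *)
Require Import Defs.
From Stdlib Require Import Classical FunctionalExtensionality ProofIrrelevance IndefiniteDescription.
Set Implicit Arguments.

Section S.
Variable L : locale.
Variable HL : is_interval L.
Variable E : presheaf L.

Definition val (a : L) (s : Lim (Im E) (Some a)) : E (Some (bot L)) :=
  proj1_sig (proj1_sig s (bot L) (or_intror eq_refl)).

Lemma val_spec a (s : Lim (Im E) (Some a)) b hb :
  proj1_sig (proj1_sig s b hb) = val s.
Proof.
  destruct s as [fs Hs]. unfold val; simpl.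
  rewrite <- (Hs (bot L) b (or_intror eq_refl) hb (bot_le b)). reflexivity.
Qed.

Lemma val_im a (s : Lim (Im E) (Some a)) b (h : lt b a) :
  exists z : E (Some b), res E (x:=Some (bot L)) (y:=Some b) (bot_le b) z = val s.
Proof.
  destruct (proj2_sig (proj1_sig s b (or_introl h))) as [z Hz].
  exists z. rewrite Hz. apply val_spec.
Qed.

Lemma val_res a a' (h : leP (Some a) (Some a')) (s : Lim (Im E) (Some a')) :
  val (res (Lim (Im E)) (x:=Some a) (y:=Some a') h s) = val s.
Proof. unfold val at 1. simpl. apply val_spec. Qed.

Lemma val_unit a (e : E (Some a)) :
  val (app (unit_map E) (Some a) e) = res E (x:=Some (bot L)) (y:=Some a) (bot_le a) e.
Proof. reflexivity. Qed.

Lemma lim_eq (x : option L) (u v : Lim (Im E) x) :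
  (forall hbot : leP (Some (bot L)) x,
      val (res (Lim (Im E)) (x:=Some (bot L)) (y:=x) hbot u) =
      val (res (Lim (Im E)) (x:=Some (bot L)) (y:=x) hbot v)) -> u = v.
Proof.
  destruct x as [c|]; intro H.
  - specialize (H (bot_le c)). rewrite !val_res in H.
    apply subset_eq. apply functional_extensionality_dep; intro b.
    apply functional_extensionality_dep; intro hb.
    apply subset_eq. rewrite !val_spec. exact H.
  - destruct u, v. reflexivity.
Qed.

Lemma lim_pt (x : option L) (u : Lim (Im E) x) (b : L)
  (hbx : match x with None => False | Some c => lt b c end)
  (hbot : leP (Some (bot L)) x) :
  exists z : E (Some b), res E (x:=Some (bot L)) (y:=Some b) (bot_le b) z =
    val (res (Lim (Im E)) (x:=Some (bot L)) (y:=x) hbot u).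
Proof.
  destruct x as [c|]; [|contradiction].
  rewrite val_res. apply val_im. exact hbx.
Qed.

Lemma ne_bot (x : option L) : x <> None -> leP (Some (bot L)) x.
Proof. destruct x as [c|]; intro H; [apply bot_le | congruence]. Qed.

Lemma lim_mono_sheaf : is_mono_sheaf (Lim (Im E)).
Proof.
  destruct HL as [Htot Hdense].
  split.
  - intros [a|] J bj hb Hjoin s Hcomp.
    + destruct (classic (exists j, bj j <> None)) as [[j0 Hne]|Hno].
      2:{ exfalso. destruct Hjoin as [_ Hl]. apply (Hl None).
          intro j. destruct (bj j) eqn:Ej; [|exact I].
          exfalso; apply Hno; exists j; congruence. }
      set (h0 := ne_bot Hne).
      set (y := val (res (Lim (Im E)) (x:=Some (bot L)) (y:=bj j0) h0 (s j0))).
      assert (HY : forall j (h : leP (Some (bot L)) (bj j)),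
                 val (res (Lim (Im E)) (x:=Some (bot L)) (y:=bj j) h (s j)) = y).
      { intros j h. unfold y. rewrite (Hcomp j j0 (Some (bot L)) h h0). reflexivity. }
      assert (Pb : forall b, LP a b -> exists z : E (Some b),
                   res E (x:=Some (bot L)) (y:=Some b) (bot_le b) z = y).
      { intros b [hlt | ->].
        - destruct (classic (exists j, ~ leP (bj j) (Some b))) as [[j Hnle]|Hall].
          2:{ exfalso. destruct Hjoin as [_ Hl].
              assert (Hab : leP (Some a) (Some b)).
              { apply Hl. intro j. apply NNPP. intro Hn. apply Hall. exists j. exact Hn. }
              destruct hlt as [H1 H2]. apply H2. apply le_antisym; assumption. }
          assert (Hne' : bj j <> None) by (intro Hn; apply Hnle; rewrite Hn; exact I).
          assert (hbx : match bj j with None => False | Some c => lt b c end).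
          { revert Hnle. destruct (bj j) as [c|]; simpl; intro Hnle; [|apply Hnle; exact I].
            destruct (Htot b c) as [H|H]; [|contradiction].
            split; [exact H|]. intros ->. apply Hnle, le_refl. }
          destruct (@lim_pt (bj j) (s j) b hbx (ne_bot Hne')) as [z Hz].
          exists z. rewrite Hz. apply HY.
        - exists y. apply res_id. }
      assert (Hcomp' : forall b c (hb' : LP a b) (hc : LP a c) (hbc : le b c),
        res (Im E) (x:=Some b) (y:=Some c) hbc (exist _ y (Pb c hc)) = exist _ y (Pb b hb')).
      { intros. apply subset_eq. reflexivity. }
      set (t := exist _ (fun b hb' => exist _ y (Pb b hb')) Hcomp' : Lim (Im E) (Some a)).
      assert (Hvt : val t = y) by reflexivity.
      exists t. split.
      * intro j. apply lim_eq. intro hbot.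
        rewrite (res_comp (p:=Lim (Im E)) (x:=Some (bot L)) (y:=bj j) (z:=Some a) hbot (hb j) (bot_le a)).
        rewrite val_res, Hvt. symmetry. apply HY.
      * intros t' Ht'. apply lim_eq. intro hbot. rewrite !val_res, Hvt.
        rewrite <- (HY j0 h0). rewrite <- (Ht' j0).
        rewrite (res_comp (p:=Lim (Im E)) (x:=Some (bot L)) (y:=bj j0) (z:=Some a) h0 (hb j0) hbot).
        rewrite val_res. reflexivity.
    + exists tt. split.
      * intro j. generalize (hb j) (s j). clear. destruct (bj j) as [c|]; intros h u.
        -- contradiction.
        -- destruct u. reflexivity.
      * intros t' _. destruct t'. reflexivity.
  - intros a b h s t Hst. apply lim_eq. intro hbot.
    rewrite !val_res. rewrite <- (@val_res a b h s), <- (@val_res a b h t). rewrite Hst. reflexivity.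
Qed.

Section F.
Variable F : presheaf L.
Variable HF : is_mono_sheaf F.
Variable f : hom E F.

Lemma sheaf_empty : exists t : F None, forall t' : F None, t' = t.
Proof.
  destruct HF as [Hs _].
  assert (Hb : forall j : Empty_set, leP ((fun e : Empty_set => match e return option L with end) j) None)
    by (intros []).
  destruct (Hs None Empty_set (fun e => match e with end) Hb)
    with (s := fun j : Empty_set => match j return F (match j return option L with end) with end)
    as [t [_ Ht]].
  - split; [intros [] | intros u _; exact I].
  - intros [].
  - exists t. intros t'. apply Ht. intros [].
Qed.

Lemma F_none (s t : F None) : s = t.
Proof. destruct sheaf_empty as [u Hu]. rewrite (Hu s), (Hu t). reflexivity. Qed.

Lemma rb_inj a (s t : F (Some a)) :
  res F (x:=Some (bot L)) (y:=Some a) (bot_le a) s = res F (x:=Some (bot L)) (y:=Some a) (bot_le a) t -> s = t.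
Proof. destruct HF as [_ Hm]. apply Hm. Qed.

Lemma exists_t a (y : E (Some (bot L)))
  (Hy : forall b, lt b a -> exists z : E (Some b), res E (x:=Some (bot L)) (y:=Some b) (bot_le b) z = y) :
  exists t : F (Some a), res F (x:=Some (bot L)) (y:=Some a) (bot_le a) t = app f _ y.
Proof.
  destruct HF as [Hs Hm].
  destruct HL as [Htot Hdense].
  pose (J := {b : L | LP a b}).
  pose (bj := fun j : J => Some (proj1_sig j) : option L).
  assert (hb : forall j, leP (bj j) (Some a)) by (intros [b hb]; exact (LP_le hb)).
  assert (Hw : forall j : J, exists w : F (bj j),
     res F (x:=Some (bot L)) (y:=bj j) (bot_le (proj1_sig j)) w = app f _ y).
  { intros [b [hlt | ->]]; simpl.
    - destruct (Hy b hlt) as [z Hz]. exists (app f _ z). rewrite <- app_nat. rewrite Hz. reflexivity.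
    - exists (app f _ y). apply res_id. }
  pose (s := fun j => proj1_sig (constructive_indefinite_description _ (Hw j))).
  assert (Hsp : forall j, res F (x:=Some (bot L)) (y:=bj j) (bot_le (proj1_sig j)) (s j) = app f _ y).
  { intro j. unfold s. destruct (constructive_indefinite_description _ (Hw j)) as [w Hw']. exact Hw'. }
  assert (Hjoin : is_joinP bj (Some a)).
  { split; [exact hb|].
    intros [u|] Hu.
    - simpl. destruct (Htot a u) as [H|H]; [exact H|].
      destruct (classic (u = a)) as [->|Hne]; [apply le_refl|].
      destruct (Hdense u a (conj H Hne)) as [c [[Huc Hnuc] [Hca Hnca]]].
      exfalso. apply Hnuc. apply le_antisym; [exact Huc|].
      exact (Hu (exist _ c (or_introl (conj Hca Hnca)))).
    - exact (Hu (exist _ (bot L) (or_intror eq_refl))). }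
  destruct (Hs (Some a) J bj hb Hjoin s) as [t [Ht _]].
  { intros j k [c|] h1 h2.
    - apply Hm with (a := bot L) (h := bot_le c).
      rewrite (res_comp (p:=F) (x:=Some (bot L)) (y:=Some c) (z:=bj j) (bot_le c) h1 (bot_le (proj1_sig j))).
      rewrite (res_comp (p:=F) (x:=Some (bot L)) (y:=Some c) (z:=bj k) (bot_le c) h2 (bot_le (proj1_sig k))).
      rewrite Hsp, Hsp. reflexivity.
    - apply F_none. }
  pose (j0 := exist (LP a) (bot L) (or_intror eq_refl) : J).
  exists t. transitivity (s j0).
  { rewrite (proof_irrelevance _ (bot_le a) (hb j0)). exact (Ht j0). }
  rewrite <- (Hsp j0). symmetry. apply res_id.
Qed.

Definition gS (a : L) (s : Lim (Im E) (Some a)) : F (Some a) :=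
  proj1_sig (constructive_indefinite_description _ (@exists_t a (val s) (fun b h => val_im s h))).

Lemma gS_spec a (s : Lim (Im E) (Some a)) :
  res F (x:=Some (bot L)) (y:=Some a) (bot_le a) (gS s) = app f _ (val s).
Proof. unfold gS. destruct (constructive_indefinite_description _ _) as [t Ht]. exact Ht. Qed.

Definition g0 : F None := proj1_sig (constructive_indefinite_description _ sheaf_empty).

Definition g_app (x : option L) : Lim (Im E) x -> F x :=
  match x as x0 return Lim (Im E) x0 -> F x0 with
  | None => fun _ => g0
  | Some a => fun s => gS s
  end.

Lemma g_nat : forall x y (h : leP x y) (s : Lim (Im E) y),
  g_app x (res (Lim (Im E)) h s) = res F h (g_app y s).
Proof.
  intros [a|] [a'|] h s; simpl in h; try contradiction.
  - apply rb_inj. simpl. rewrite gS_spec.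
    rewrite (res_comp (p:=F) (x:=Some (bot L)) (y:=Some a) (z:=Some a') (bot_le a) h (bot_le a')).
    rewrite gS_spec. f_equal. exact (@val_res a a' h s).
  - apply F_none.
  - apply F_none.
Qed.

Definition g : hom (Lim (Im E)) F := @Hom L _ _ g_app g_nat.

End F.
End S.

Theorem corollary27 (L : locale) (HL : is_interval L) (E : presheaf L) :
  is_mono_sheaf (Lim (Im E)) /\
  forall (F : presheaf L), is_mono_sheaf F ->
  forall f : hom E F,
    exists g : hom (Lim (Im E)) F,
      (forall x s, app g x (app (unit_map E) x s) = app f x s) /\
      (forall g' : hom (Lim (Im E)) F,
          (forall x s, app g' x (app (unit_map E) x s) = app f x s) ->
          forall x s, app g' x s = app g x s).
Proof.
  split; [exact (lim_mono_sheaf HL E)|].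
  intros F HF f. exists (g HL HF f). split.
  - intros [a|] e; [|apply (F_none HF)].
    apply (rb_inj HF).
    transitivity (app f _ (val (app (unit_map E) (Some a) e))); [apply gS_spec|].
    rewrite val_unit. rewrite <- app_nat. reflexivity.
  - intros g' Hg' [a|] s; [|apply (F_none HF)].
    apply (rb_inj HF).
    transitivity (app f _ (val s)); [|symmetry; apply gS_spec].
    rewrite <- app_nat.
    assert (Hr : res (Lim (Im E)) (x:=Some (bot L)) (y:=Some a) (bot_le a) s
                 = app (unit_map E) (Some (bot L)) (val s)).
    { apply lim_eq. intro hbot. rewrite !val_res, val_unit, res_id. reflexivity. }
    rewrite Hr, Hg'. reflexivity.
Qed.
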